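(* For every finite collection $\Gamma$ of pricing policies, the OJS problem admits a posted price mechanism whose regret with respect to $\Gamma$ on $T$-round instances is $O\!\left(T^{\frac12\left(1+\frac{CW}{CW+1}\right)}\sqrt{\log|\Gamma|}\right)$.
   Context: OJS problem: there are $N$ slots; slot $i\in[N]$ has bandwidth $c(i)$. $T$ jobs arrive in order $t=1,\dots,T$; job $t$ has arrival slot $a_t$, departure slot $d_t\ge a_t$, length $1\le l_t\le d_t-a_t+1$ and value $v_t\in[0,1)$, chosen by an adversary; jobs are reported at the beginning of their arrival slot in index order. $C\ge\max_ic(i)$ and $W\ge\max_t(d_t-a_t+1)$ are known and independent of $T$. Let $A_t=[a_t,a_t+W-1]$ and $\mathcal I_t=\{[i,i+l_t-1]:a_t\le i\le d_t-l_t+1\}$. For job $t$ the mechanism posts $\bm p_t\in(0,1]^{A_t}$ before learning $d_t,l_t,v_t$ (which are revealed afterwards); the job receives one bandwidth unit of each slot in $\hat A^{\bm p}_t=\emptyset$ if $v_t<\min_{I\in\mathcal I_t}\sum_{i\in I}\bm p(i)$ and otherwise $\hat A^{\bm p}_t=\arg\min_{I\in\mathcal I_t}\sum_{i\in I}\bm p(i)$ (lexicographic ties), paying $\hat q^{\bm p}_t=\sum_{i\in\hat A^{\bm p}_t}\bm p(i)$. Bandwidth vectors $\bm\lambda_t\in\{0,\dots,C\}^{A_t}$: $\bm\lambda_t(i)=c(i)$ if slot $i$ was not allocated to jobs $1,\dots,t-1$; $\bm\lambda_{t+1}(i)=\bm\lambda_t(i)-1$ if slot $i$ is allocated to job $t$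 and $i\in A_{t+1}$. Posted prices must be feasible: $\bm p_t(i)=1$ whenever $\bm\lambda_t(i)=0$. A pricing policy $\gamma$ maps bandwidth vectors to feasible price vectors; playing it repeatedly from the start gives prices $\bm p^\gamma_t$ and revenue $\sum_t\hat q^{\bm p^\gamma_t}_t$. Regret w.r.t. $\Gamma$: $\max_{\gamma\in\Gamma}\sum_t\hat q^{\bm p^\gamma_t}_t-\mathbb{E}[\sum_t\hat q^{\bm p_t}_t]$. *)

(* Defs.v *)
From Stdlib Require Import Reals Lra Arith List Sorted.
Import ListNotations.
Open Scope R_scope.

(** A job: arrival slot a, departure slot d, length l, value v. *)
Record job := Job { ja : nat; jd : nat; jl : nat; jv : R }.

Definition valid_job (N W : nat) (j : job) : Prop :=
  (1 <= ja j)%nat /\ (ja j <= jd j)%nat /\ (jd j <= N)%nat /\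
  (1 <= jl j)%nat /\ (jl j <= jd j - ja j + 1)%nat /\
  (jd j - ja j + 1 <= W)%nat /\
  0 <= jv j /\ jv j < 1.

Definition valid_instance (N W : nat) (js : list job) : Prop :=
  Forall (valid_job N W) js /\ Sorted (fun x y => (ja x <= ja y)%nat) js.

Fixpoint sumR (f : nat -> R) (n : nat) : R :=
  match n with O => 0 | S m => sumR f m + f m end.

(** Price vectors are indexed by the offset k in A_t, i.e. slot a_t + k. *)
Definition cost (p : nat -> R) (a l s : nat) : R :=
  sumR (fun k => p (s - a + k)%nat) l.

Fixpoint argmin_from (f : nat -> R) (best : nat) (l : list nat) : nat :=
  match l with
  | [] => best
  | x :: r => if Rlt_dec (f x) (f best) then argmin_from f x r
              else argmin_from f best r
  end.

(** Cheapest interval [s, s+l-1] with a <= s <= d-l+1, lexicographic ties. *)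
Definition best_start (p : nat -> R) (j : job) : nat :=
  argmin_from (cost p (ja j) (jl j)) (ja j)
              (seq (S (ja j)) (jd j - jl j + 1 - ja j)).

Definition allocate (rem : nat -> nat) (s l : nat) : nat -> nat :=
  fun i => if andb (Nat.leb s i) (Nat.ltb i (s + l)) then (rem i - 1)%nat
           else rem i.

Definition step (p : nat -> R) (j : job) (rem : nat -> nat) : R * (nat -> nat) :=
  let s := best_start p j in
  let q := cost p (ja j) (jl j) s in
  if Rlt_dec (jv j) q then (0, rem) else (q, allocate rem s (jl j)).

(** A (deterministic) online pricer: from the history of past jobs (fully
    revealed), the arrival slot of the current job and the current remaining
    bandwidth of every slot, it posts a price vector (indexed by offsets). *)
Definition pricer := list job -> nat -> (nat -> nat) -> (nat -> R).

Fixpoint revenue_aux (pr : pricer) (hist : list job) (rem : nat -> nat)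
    (js : list job) : R :=
  match js with
  | [] => 0
  | j :: r =>
      let p := pr hist (ja j) rem in
      fst (step p j rem) + revenue_aux pr (hist ++ [j]) (snd (step p j rem)) r
  end.

Definition cap (N : nat) (c : nat -> nat) : nat -> nat :=
  fun i => if andb (Nat.leb 1 i) (Nat.leb i N) then c i else O.

Definition revenue (N : nat) (c : nat -> nat) (pr : pricer) (js : list job) : R :=
  revenue_aux pr [] (cap N c) js.

Definition feasible_prices (W : nat) (rem : nat -> nat) (a : nat) (p : nat -> R)
  : Prop :=
  forall k, (k < W)%nat -> 0 < p k /\ p k <= 1 /\ (rem (a + k)%nat = O -> p k = 1).

Fixpoint feasible_run_aux (W : nat) (pr : pricer) (hist : list job)
    (rem : nat -> nat) (js : list job) : Prop :=
  match js with
  | [] => True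
  | j :: r =>
      let p := pr hist (ja j) rem in
      feasible_prices W rem (ja j) p /\
      feasible_run_aux W pr (hist ++ [j]) (snd (step p j rem)) r
  end.

Definition feasible_run (N W : nat) (c : nat -> nat) (pr : pricer) (js : list job)
  : Prop := feasible_run_aux W pr [] (cap N c) js.

(** Pricing policies: maps from bandwidth vectors lambda in {0..C}^{A_t}
    (indexed by offsets 0..W-1) to feasible price vectors. *)
Definition policy := (nat -> nat) -> (nat -> R).

Definition feasible_policy (C W : nat) (g : policy) : Prop :=
  forall lam : nat -> nat, (forall k, (k < W)%nat -> (lam k <= C)%nat) ->
  forall k, (k < W)%nat ->
    0 < g lam k /\ g lam k <= 1 /\ (lam k = O -> g lam k = 1).

Definition window (W : nat) (rem : nat -> nat) (a : nat) : nat -> nat :=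
  fun k => if Nat.ltb k W then rem (a + k)%nat else O.

Definition policy_pricer (W : nat) (g : policy) : pricer :=
  fun _ a rem => g (window W rem a).

(** A randomized posted price mechanism: a finite probability distribution
    over deterministic online pricers (the instance is fixed in advance). *)
Definition rand_mech := list (R * pricer).

Definition is_distribution (M : rand_mech) : Prop :=
  Forall (fun wp => 0 <= fst wp) M /\
  fold_right (fun wp acc => fst wp + acc) 0 M = 1.

Definition expected_revenue (N : nat) (c : nat -> nat) (M : rand_mech)
    (js : list job) : R :=
  fold_right (fun wp acc => fst wp * revenue N c (snd wp) js + acc) 0 M.

Definition regret_exponent (C W : nat) : R :=
  / 2 * (1 + INR (C * W) / (INR (C * W) + 1)).

(* Main.v *)
Require Import Defs.
From Stdlib Require Import Reals List Lra Lia Sorted Arith ZArith.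
Import ListNotations.
Open Scope R_scope.

Lemma sumR_ext f g n : (forall k, (k < n)%nat -> f k = g k) -> sumR f n = sumR g n.
Proof. induction n; simpl; intros H; auto. rewrite IHn by (intros; apply H; lia). rewrite H by lia; auto. Qed.

Lemma sumR_le f g n : (forall k, (k < n)%nat -> f k <= g k) -> sumR f n <= sumR g n.
Proof. induction n; simpl; intros H; [lra|]. pose proof (H n ltac:(lia)). pose proof (IHn ltac:(intros; apply H; lia)). lra. Qed.

Lemma sumR_nonneg f n : (forall k, (k < n)%nat -> 0 <= f k) -> 0 <= sumR f n.
Proof. intros H. replace 0 with (sumR (fun _ => 0) n). apply sumR_le; auto.
induction n; simpl; auto. rewrite IHn; [lra|]. intros; apply H; lia. Qed.

Lemma sumR_plus f g n : sumR (fun k => f k + g k) n = sumR f n + sumR g n.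
Proof. induction n; simpl; lra. Qed.

Lemma sumR_scal c f n : sumR (fun k => c * f k) n = c * sumR f n.
Proof. induction n; simpl; [lra|]. rewrite IHn; lra. Qed.

Lemma sumR_minus f g n : sumR (fun k => f k - g k) n = sumR f n - sumR g n.
Proof. induction n; simpl; lra. Qed.

Lemma sumR_shift f n : sumR f (S n) = f 0%nat + sumR (fun k => f (S k)) n.
Proof. induction n; simpl in *; [lra|]. rewrite IHn; lra. Qed.

Lemma sumR_add f a b : sumR f (a + b) = sumR f a + sumR (fun k => f (a + k)%nat) b.
Proof. induction b; simpl. rewrite Nat.add_0_r; lra. rewrite Nat.add_succ_r; simpl. rewrite IHb; lra. Qed.

Lemma sumR_term f n k0 : (forall k, (k < n)%nat -> 0 <= f k) -> (k0 < n)%nat -> f k0 <= sumR f n.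
Proof. induction n; intros H Hk; [lia|]. simpl. destruct (Nat.eq_dec k0 n).
subst. pose proof (sumR_nonneg f n ltac:(intros; apply H; lia)). lra.
pose proof (IHn ltac:(intros; apply H; lia) ltac:(lia)). pose proof (H n ltac:(lia)). lra. Qed.

Lemma sumR_const c n : sumR (fun _ => c) n = INR n * c.
Proof. induction n; [simpl; lra|]. simpl sumR. rewrite IHn. rewrite S_INR; lra. Qed.

Lemma sumR_swap (f : nat -> nat -> R) n m :
  sumR (fun u => sumR (fun b => f u b) m) n = sumR (fun b => sumR (fun u => f u b) n) m.
Proof. induction n; simpl. rewrite sumR_const; simpl; lra.
rewrite IHn. rewrite <- sumR_plus. reflexivity. Qed.

Lemma argmin_in f best l : In (argmin_from f best l) (best :: l).
Proof. revert best; induction l as [|x r IH]; intros best; simpl; auto.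
destruct (Rlt_dec (f x) (f best)).
- specialize (IH x). simpl in IH. destruct IH; auto.
- specialize (IH best). simpl in IH. destruct IH; auto.
Qed.

Lemma best_start_bounds N W p j : valid_job N W j ->
  (ja j <= best_start p j)%nat /\ (best_start p j + jl j <= jd j + 1)%nat.
Proof. intros (H1&H2&H3&H4&H5&H6&_). unfold best_start.
pose proof (argmin_in (cost p (ja j) (jl j)) (ja j) (seq (S (ja j)) (jd j - jl j + 1 - ja j))) as H.
destruct H as [H|H]. rewrite <- H. lia. apply in_seq in H. lia. Qed.

Lemma cost_ones a l s : cost (fun _ => 1) a l s = INR l.
Proof. unfold cost. rewrite sumR_const. lra. Qed.

Lemma step_ones N W j rem : valid_job N W j -> step (fun _ => 1) j rem = (0, rem).
Proof. intros (H1&H2&H3&H4&H5&H6&H7&H8). unfold step. rewrite cost_ones.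
destruct (Rlt_dec (jv j) (INR (jl j))); auto. exfalso. apply n.
apply Rlt_le_trans with 1; auto. apply (le_INR 1); auto. Qed.

Fixpoint run_state (pr : pricer) (hist : list job) (rem : nat -> nat) (js : list job) : nat -> nat :=
  match js with
  | [] => rem
  | j :: r => run_state pr (hist ++ [j]) (snd (step (pr hist (ja j) rem) j rem)) r
  end.

Lemma rev_app pr A B hist rem : revenue_aux pr hist rem (A ++ B) =
  revenue_aux pr hist rem A + revenue_aux pr (hist ++ A) (run_state pr hist rem A) B.
Proof. revert hist rem; induction A as [|j A IH]; intros hist rem; simpl.
rewrite app_nil_r; lra. rewrite IH. rewrite <- app_assoc. simpl. lra. Qed.

Lemma run_state_app pr A B hist rem : run_state pr hist rem (A ++ B) =
  run_state pr (hist ++ A) (run_state pr hist rem A) B.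
Proof. revert hist rem; induction A as [|j A IH]; intros hist rem; simpl.
rewrite app_nil_r; auto. rewrite IH. rewrite <- app_assoc. auto. Qed.

Definition polstep (W : nat) (h : policy) (j : job) (lam : nat -> nat) :=
  step (h (window W lam (ja j))) j lam.

Fixpoint prev W h lam Q : R := match Q with [] => 0 | j :: r =>
  fst (polstep W h j lam) + prev W h (snd (polstep W h j lam)) r end.
Fixpoint pst W h lam Q : nat -> nat := match Q with [] => lam | j :: r =>
  pst W h (snd (polstep W h j lam)) r end.

Lemma rev_pol W h hist lam Q : revenue_aux (policy_pricer W h) hist lam Q = prev W h lam Q.
Proof. revert hist lam; induction Q; intros; simpl; auto. rewrite IHQ. reflexivity. Qed.

Lemma st_pol W h hist lam Q : run_state (policy_pricer W h) hist lam Q = pst W h lam Q.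
Proof. revert hist lam; induction Q; intros; simpl; auto. Qed.

Lemma pst_app W h lam A B : pst W h lam (A ++ B) = pst W h (pst W h lam A) B.
Proof. revert lam; induction A; intros; simpl; auto. Qed.

Lemma prev_app W h lam A B : prev W h lam (A ++ B) = prev W h lam A + prev W h (pst W h lam A) B.
Proof. revert lam; induction A; intros; simpl. lra. rewrite IHA. lra. Qed.

Lemma step_le p j rem i : (snd (step p j rem) i <= rem i)%nat.
Proof. unfold step. destruct Rlt_dec; simpl; auto. unfold allocate.
destruct (_ && _)%bool; lia. Qed.

Lemma step_untouched N W p j rem i : valid_job N W j -> (ja j + W <= i)%nat ->
  snd (step p j rem) i = rem i.
Proof. intros Hv Hi. pose proof (best_start_bounds N W p j Hv) as [B1 B2].
destruct Hv as (H1&H2&H3&H4&H5&H6&_). unfold step. destruct Rlt_dec; simpl; auto.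
unfold allocate. destruct (Nat.ltb_spec i (best_start p j + jl j)); [lia|].
rewrite Bool.andb_false_r. auto. Qed.

Lemma run_state_le pr hist rem Q i : (run_state pr hist rem Q i <= rem i)%nat.
Proof. revert hist rem; induction Q; intros; simpl; auto.
eapply Nat.le_trans; [apply IHQ|]. apply step_le. Qed.

Lemma run_state_untouched N W pr hist rem Q i :
  (forall j, In j Q -> valid_job N W j /\ (ja j + W <= i)%nat) ->
  run_state pr hist rem Q i = rem i.
Proof. revert hist rem; induction Q; intros hist rem H; simpl; auto.
rewrite IHQ by (intros; apply H; simpl; auto).
destruct (H a (or_introl eq_refl)). eapply step_untouched; eauto. Qed.

Lemma pst_le W h lam Q i : (pst W h lam Q i <= lam i)%nat.
Proof. rewrite <- (st_pol W h [] lam Q). apply run_state_le. Qed.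

Definition lecap N c (lam : nat -> nat) := forall i, (lam i <= cap N c i)%nat.

Definition Phi (W a0 : nat) (lam : nat -> nat) : R := sumR (fun k => INR (lam (a0 + k)%nat)) (2 * W).

Lemma Phi_nonneg W a0 lam : 0 <= Phi W a0 lam.
Proof. apply sumR_nonneg. intros; apply pos_INR. Qed.

Lemma Phi_le N c C W a0 lam : (forall i, (1 <= i <= N)%nat -> (c i <= C)%nat) -> lecap N c lam ->
  Phi W a0 lam <= 2 * INR C * INR W.
Proof. intros Hc Hl. unfold Phi. apply Rle_trans with (sumR (fun _ => INR C) (2 * W)).
apply sumR_le. intros k _. apply le_INR. eapply Nat.le_trans; [apply Hl|]. unfold cap.
destruct (Nat.leb_spec 1 (a0 + k)); destruct (Nat.leb_spec (a0+k) N); simpl; try lia. apply Hc; lia.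
rewrite sumR_const, mult_INR. simpl. lra. Qed.

Lemma cap_leC N c C i : (forall i, (1 <= i <= N)%nat -> (c i <= C)%nat) -> (cap N c i <= C)%nat.
Proof. intros Hc. unfold cap. destruct (Nat.leb_spec 1 i); destruct (Nat.leb_spec i N); simpl; try lia. apply Hc; lia. Qed.

Lemma cap_out N c i : (N < i)%nat -> cap N c i = 0%nat.
Proof. intros. unfold cap. destruct (Nat.leb_spec i N); [lia|]. rewrite Bool.andb_false_r; auto. Qed.

Section Pol.
Variables (N C W : nat) (c : nat -> nat) (h : policy).
Hypothesis Hc : forall i, (1 <= i <= N)%nat -> (c i <= C)%nat.
Hypothesis Hh : feasible_policy C W h.

Lemma pol_prices lam a k : lecap N c lam -> (k < W)%nat ->
  0 < h (window W lam a) k /\ h (window W lam a) k <= 1 /\ (lam (a + k)%nat = 0%nat -> h (window W lam a) k = 1).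
Proof. intros Hl Hk. assert (Hw : forall k, (k < W)%nat -> (window W lam a k <= C)%nat).
{ intros k' Hk'. unfold window. destruct (Nat.ltb_spec k' W); [|lia].
  eapply Nat.le_trans; [apply Hl|]. apply cap_leC; auto. }
destruct (Hh _ Hw k Hk) as (A1&A2&A3). split; auto. split; auto. intros H0. apply A3.
unfold window. destruct (Nat.ltb_spec k W); [auto|lia]. Qed.
End Pol.

Lemma cost_nonneg N W p j s : (forall k, (k < W)%nat -> 0 < p k) -> valid_job N W j ->
  (ja j <= s)%nat -> (s + jl j <= jd j + 1)%nat -> 0 <= cost p (ja j) (jl j) s.
Proof. intros Hp Hv H1 H2. destruct Hv as (V1&V2&V3&V4&V5&V6&_). unfold cost. apply sumR_nonneg.
intros k Hk. apply Rlt_le, Hp. lia. Qed.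

Lemma step_fst_bounds N W p j rem : (forall k, (k < W)%nat -> 0 < p k) -> valid_job N W j ->
  0 <= fst (step p j rem) < 1.
Proof. intros Hp Hv. pose proof (best_start_bounds N W p j Hv) as [B1 B2].
pose proof (cost_nonneg N W p j _ Hp Hv B1 B2).
destruct Hv as (V1&V2&V3&V4&V5&V6&V7&V8). unfold step. destruct Rlt_dec; simpl; lra. Qed.

Lemma Phi_drop N C W c h a0 j lam :
  (forall i, (1 <= i <= N)%nat -> (c i <= C)%nat) -> feasible_policy C W h ->
  valid_job N W j -> lecap N c lam -> (a0 <= ja j)%nat -> (ja j < a0 + W)%nat ->
  fst (polstep W h j lam) <= Phi W a0 lam - Phi W a0 (snd (polstep W h j lam)).
Proof. intros Hc Hh Hv Hl Ha1 Ha2. unfold polstep.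
set (p := h (window W lam (ja j))).
pose proof (best_start_bounds N W p j Hv) as [B1 B2].
assert (Hpos : forall k, (k < W)%nat -> 0 < p k) by (intros; apply (pol_prices N C W c h Hc Hh); auto).
pose proof Hv as (V1&V2&V3&V4&V5&V6&V7&V8).
unfold step. set (s := best_start p j). fold s in B1, B2.
destruct Rlt_dec as [Hlt|Hge]; simpl. lra.
assert (Hs : (1 <= lam s)%nat).
{ destruct (Nat.eq_dec (lam s) 0) as [E|E]; [|lia]. exfalso. apply Hge.
  assert (Hp1 : p (s - ja j)%nat = 1).
  { apply (pol_prices N C W c h Hc Hh); auto. lia. replace (ja j + (s - ja j))%nat with s by lia. auto. }
  apply Rlt_le_trans with 1; [lra|]. unfold cost.
  replace 1 with (p (s - ja j + 0)%nat) by (rewrite Nat.add_0_r; auto).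
  apply (sumR_term (fun k => p (s - ja j + k)%nat)). intros; apply Rlt_le, Hpos; lia. lia. }
unfold Phi. rewrite <- sumR_minus.
apply Rle_trans with (INR (lam (a0 + (s - a0))%nat) - INR (allocate lam s (jl j) (a0 + (s - a0))%nat)).
- replace (a0 + (s - a0))%nat with s by lia. unfold allocate.
  destruct (Nat.leb_spec s s); [|lia]. destruct (Nat.ltb_spec s (s + jl j)); [|lia]. simpl.
  rewrite minus_INR by lia. simpl. lra.
- apply (sumR_term (fun k => INR (lam (a0 + k)%nat) - INR (allocate lam s (jl j) (a0 + k)))).
  intros k _. assert (allocate lam s (jl j) (a0 + k) <= lam (a0 + k))%nat.
  { unfold allocate. destruct (_ && _)%bool; lia. } apply le_INR in H. lra. lia.
Qed.

Definition domb (N a : nat) (rem lam : nat -> nat) : bool :=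
  forallb (fun i => Nat.leb (lam i) (rem i)) (seq a (S N - a)).

Definition mprice N W (h : policy) (a : nat) (rem lam : nat -> nat) : nat -> R :=
  if domb N a rem lam then h (window W lam a) else (fun _ => 1).

Lemma domb_true N a rem lam : (forall i, (a <= i)%nat -> (lam i <= rem i)%nat) -> domb N a rem lam = true.
Proof. intros H. unfold domb. apply forallb_forall. intros i Hi. apply in_seq in Hi.
apply Nat.leb_le, H. lia. Qed.

Lemma domb_spec N c a rem lam : domb N a rem lam = true -> lecap N c lam ->
  forall i, (a <= i)%nat -> (lam i <= rem i)%nat.
Proof. intros H Hl i Hi. destruct (Nat.le_gt_cases i N).
- unfold domb in H. rewrite forallb_forall in H. apply Nat.leb_le, H. apply in_seq. lia.
- pose proof (Hl i). rewrite cap_out in H1 by lia. lia. Qed.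

Lemma step_mono p j r1 r2 a0 : (forall i, (a0 <= i)%nat -> (r1 i <= r2 i)%nat) ->
  fst (step p j r1) = fst (step p j r2) /\
  (forall i, (a0 <= i)%nat -> (snd (step p j r1) i <= snd (step p j r2) i)%nat).
Proof. intros H. unfold step. destruct Rlt_dec; simpl; split; auto.
intros i Hi. unfold allocate. destruct (_ && _)%bool; specialize (H i Hi); lia. Qed.

Lemma lecap_step N c p j lam : lecap N c lam -> lecap N c (snd (step p j lam)).
Proof. intros H i. eapply Nat.le_trans; [apply step_le|apply H]. Qed.

Section Mech.
Variables (N C W : nat) (c : nat -> nat) (h : policy) (pr : pricer).
Hypothesis Hc : forall i, (1 <= i <= N)%nat -> (c i <= C)%nat.
Hypothesis Hh : feasible_policy C W h.

Definition Hpr hist lam (n : nat) := forall Q1 a r, (length Q1 < n)%nat ->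
  pr (hist ++ Q1) a r = mprice N W h a r (pst W h lam Q1).

Lemma Hpr_step hist lam j n : Hpr hist lam (S n) ->
  Hpr (hist ++ [j]) (snd (polstep W h j lam)) n.
Proof. intros H Q1 a r HQ. rewrite <- app_assoc. simpl. apply (H (j :: Q1)). simpl; lia. Qed.

Lemma Hpr_now hist lam n a r : Hpr hist lam (S n) -> pr hist a r = mprice N W h a r lam.
Proof. intros H. specialize (H [] a r ltac:(simpl; lia)). rewrite app_nil_r in H. auto. Qed.

Lemma mimic : forall Q hist rem lam a0,
  (forall j, In j Q -> (a0 <= ja j)%nat) ->
  (forall i, (a0 <= i)%nat -> (lam i <= rem i)%nat) -> lecap N c lam ->
  Hpr hist lam (length Q) ->
  revenue_aux pr hist rem Q = prev W h lam Q.
Proof. induction Q as [|j Q IH]; intros hist rem lam a0 HQ Hd Hl HP; simpl; auto.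
rewrite (Hpr_now hist lam (length Q)) by auto. unfold mprice.
rewrite domb_true. 2:{ intros i Hi. apply Hd. pose proof (HQ j (or_introl eq_refl)). lia. }
unfold polstep. destruct (step_mono (h (window W lam (ja j))) j lam rem a0 Hd) as [E1 E2].
rewrite E1. f_equal. apply (IH _ _ _ a0); auto.
intros; apply HQ; simpl; auto. apply lecap_step; auto. apply Hpr_step; auto. Qed.

Lemma blocking : forall Q hist rem lam a0,
  StronglySorted (fun x y => (ja x <= ja y)%nat) Q ->
  (forall j, In j Q -> valid_job N W j /\ (a0 <= ja j)%nat) ->
  (forall i, (a0 + W <= i)%nat -> rem i = cap N c i) -> lecap N c lam ->
  Hpr hist lam (length Q) ->
  prev W h lam Q - Phi W a0 lam <= revenue_aux pr hist rem Q.
Proof. induction Q as [|j Q IH]; intros hist rem lam a0 HS HQ Hr Hl HP.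
{ simpl. pose proof (Phi_nonneg W a0 lam). lra. }
destruct (domb N (ja j) rem lam) eqn:Ed.
- rewrite (mimic (j :: Q) hist rem lam (ja j)); auto.
  pose proof (Phi_nonneg W a0 lam). lra.
  intros j' [<-|Hj']; auto. inversion HS; subst. rewrite Forall_forall in H2. apply H2; auto.
  apply (domb_spec N c); auto.
- destruct (HQ j (or_introl eq_refl)) as [Hv Ha].
  assert (Hlt : (ja j < a0 + W)%nat).
  { destruct (Nat.lt_ge_cases (ja j) (a0 + W)); auto. exfalso.
    rewrite domb_true in Ed; [discriminate|]. intros i Hi. rewrite Hr by lia. apply Hl. }
  simpl. rewrite (Hpr_now hist lam (length Q)) by auto. unfold mprice. rewrite Ed.
  rewrite (step_ones N W j rem Hv). simpl.
  pose proof (Phi_drop N C W c h a0 j lam Hc Hh Hv Hl Ha Hlt).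
  inversion HS; subst.
  pose proof (IH (hist ++ [j]) rem (snd (polstep W h j lam)) a0 H2
     ltac:(intros; apply HQ; simpl; auto) Hr (lecap_step N c _ j lam Hl) (Hpr_step _ _ _ _ HP)).
  lra.
Qed.
End Mech.

Fixpoint prodR (f : nat -> R) (n : nat) : R := match n with O => 1 | S m => prodR f m * f m end.

Lemma ln_le_m1 z : 0 < z -> ln z <= z - 1.
Proof. intros Hz. pose proof (exp_ineq1_le (ln z)). rewrite exp_ln in H; lra. Qed.

Lemma ln_mono x y : 0 < x -> x <= y -> ln x <= ln y.
Proof. intros Hx Hxy. destruct (Rle_lt_or_eq_dec _ _ Hxy). apply Rlt_le, ln_increasing; auto. subst; lra. Qed.

Lemma ln_lower y : 0 <= y -> y - y * y <= ln (1 + y).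
Proof. intros Hy. assert (H : ln (/ (1 + y)) <= / (1 + y) - 1) by (apply ln_le_m1; apply Rinv_0_lt_compat; lra).
rewrite ln_Rinv in H by lra.
assert (E : 1 - / (1 + y) - (y - y * y) = y * y * y / (1 + y)) by (field; lra).
assert (0 <= y * y * y / (1 + y)).
{ unfold Rdiv. apply Rmult_le_pos; [|apply Rlt_le, Rinv_0_lt_compat; lra]. apply Rmult_le_pos; [apply Rmult_le_pos|]; lra. }
lra. Qed.

Lemma prodR_pos f n : (forall k, (k < n)%nat -> 0 < f k) -> 0 < prodR f n.
Proof. induction n; simpl; intros; [lra|]. apply Rmult_lt_0_compat; auto. Qed.

Lemma prodR_ext f g n : (forall k, (k < n)%nat -> f k = g k) -> prodR f n = prodR g n.
Proof. induction n; simpl; intros; auto. rewrite IHn, H; auto. Qed.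

Lemma ln_prodR f n : (forall k, (k < n)%nat -> 0 < f k) -> ln (prodR f n) = sumR (fun k => ln (f k)) n.
Proof. induction n; simpl; intros H. apply ln_1. rewrite ln_mult. rewrite IHn; auto.
apply prodR_pos; auto. auto. Qed.

Section Hedge.
Variables (X : nat -> nat -> R) (eps : R) (n : nat).
Hypothesis HX : forall b j, (j < n)%nat -> 0 <= X b j <= 1.
Hypothesis Heps : 0 < eps.
Hypothesis Hn : (1 <= n)%nat.

Definition hw b j := prodR (fun b' => 1 + eps * X b' j) b.
Definition hWt b := sumR (fun j => hw b j) n.
Definition hq b j := hw b j / hWt b.
Definition hE b := sumR (fun j => hq b j * X b j) n.

Lemma hw_pos b j : (j < n)%nat -> 0 < hw b j.
Proof. intros. apply prodR_pos. intros. pose proof (HX k j H). nra. Qed.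

Lemma hWt_pos b : 0 < hWt b.
Proof. unfold hWt. apply Rlt_le_trans with (hw b 0%nat). apply hw_pos; lia.
apply (sumR_term (fun j => hw b j)). intros; apply Rlt_le, hw_pos; auto. lia. Qed.

Lemma hq_nonneg b j : (j < n)%nat -> 0 <= hq b j.
Proof. intros. unfold hq. apply Rlt_le, Rdiv_lt_0_compat. apply hw_pos; auto. apply hWt_pos. Qed.

Lemma hq_sum b : sumR (fun j => hq b j) n = 1.
Proof. unfold hq. unfold Rdiv. rewrite (sumR_ext _ (fun j => / hWt b * hw b j)) by (intros; lra).
rewrite sumR_scal. pose proof (hWt_pos b). change (sumR (hw b) n) with (hWt b). apply Rinv_l. lra. Qed.

Lemma hE_nonneg b : 0 <= hE b.
Proof. apply sumR_nonneg. intros. pose proof (hq_nonneg b k H). pose proof (HX b k H). nra. Qed.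

Lemma hWt_S b : hWt (S b) = hWt b * (1 + eps * hE b).
Proof. unfold hWt at 1.
rewrite (sumR_ext _ (fun j => hw b j + eps * (hw b j * X b j))) by (intros; unfold hw; simpl; lra).
rewrite sumR_plus, sumR_scal.
assert (E : hE b = / hWt b * sumR (fun j => hw b j * X b j) n).
{ unfold hE, hq. rewrite <- sumR_scal. apply sumR_ext; intros; unfold Rdiv; lra. }
rewrite E. pose proof (hWt_pos b).
try change (sumR (hw b) n) with (hWt b). try change (sumR (fun j => hw b j) n) with (hWt b).
set (S1 := sumR (fun j => hw b j * X b j) n). field. lra. Qed.

Lemma ln_hWt b : ln (hWt b) = ln (INR n) + sumR (fun k => ln (1 + eps * hE k)) b.
Proof. induction b. unfold hWt, hw. simpl prodR. rewrite sumR_const. simpl sumR. rewrite Rmult_1_r, Rplus_0_r. auto.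
rewrite hWt_S. rewrite ln_mult. rewrite IHb. simpl; lra. apply hWt_pos.
pose proof (hE_nonneg b). nra. Qed.

Theorem hedge B js : (js < n)%nat ->
  sumR (fun b => X b js) B - sumR hE B <= eps * INR B + ln (INR n) / eps.
Proof. intros Hj.
assert (H1 : ln (hw B js) <= ln (hWt B)).
{ apply ln_mono. apply hw_pos; auto. unfold hWt. apply (sumR_term (fun j => hw B j)); auto.
  intros; apply Rlt_le, hw_pos; auto. }
rewrite ln_hWt in H1. unfold hw in H1. rewrite ln_prodR in H1.
2:{ intros. pose proof (HX k js Hj). nra. }
assert (H2 : sumR (fun b => eps * X b js - eps * eps) B <= sumR (fun k => ln (1 + eps * X k js)) B).
{ apply sumR_le. intros k _. pose proof (HX k js Hj). pose proof (ln_lower (eps * X k js)).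
  assert (eps * X k js * (eps * X k js) <= eps * eps). { apply Rmult_le_compat; nra. } nra. }
assert (H3 : sumR (fun k => ln (1 + eps * hE k)) B <= sumR (fun k => eps * hE k) B).
{ apply sumR_le. intros k _. pose proof (hE_nonneg k). pose proof (ln_le_m1 (1 + eps * hE k)). nra. }
rewrite sumR_minus, !sumR_scal, sumR_const in H2. rewrite sumR_scal in H3.
apply Rmult_le_reg_l with eps; auto. unfold Rdiv.
replace (eps * (eps * INR B + ln (INR n) * / eps)) with (eps * eps * INR B + ln (INR n)) by (field; lra).
lra. Qed.
End Hedge.

Fixpoint chooseF (k : nat -> nat) (m : nat) (u : nat) : nat :=
  match m with O => O | S m' => if Nat.ltb u (k O) then O else S (chooseF (fun j => k (S j)) m' (u - k O)) end.
Fixpoint Ksum (k : nat -> nat) (m : nat) : nat :=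
  match m with O => O | S m' => (k O + Ksum (fun j => k (S j)) m')%nat end.

Lemma INR_Ksum k m : INR (Ksum k m) = sumR (fun j => INR (k j)) m.
Proof. revert k; induction m; intros k; simpl Ksum. simpl; auto.
rewrite plus_INR, IHm, sumR_shift. auto. Qed.

Lemma choose_sum m : forall k F, sumR (fun u => F (chooseF k m u)) (Ksum k m) = sumR (fun j => INR (k j) * F j) m.
Proof. induction m; intros k F; simpl Ksum. simpl; auto.
rewrite sumR_add, sumR_shift. f_equal.
- rewrite (sumR_ext _ (fun _ => F O)). rewrite sumR_const; auto.
  intros u Hu. simpl. destruct (Nat.ltb_spec u (k O)); [auto|lia].
- rewrite <- (IHm (fun j => k (S j)) (fun j => F (S j))). apply sumR_ext. intros u _. simpl.
  destruct (Nat.ltb_spec (k O + u) (k O)); [lia|]. f_equal. f_equal. f_equal. lia. Qed.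

Definition kf (r : R) : nat := Z.to_nat (Int_part r).

Lemma kf_spec r : 0 <= r -> INR (kf r) <= r /\ r - 1 < INR (kf r).
Proof. intros Hr. destruct (base_Int_part r) as [A1 A2].
assert (Hz : (0 <= Int_part r)%Z). { assert (-1 < IZR (Int_part r)) by lra.
  apply lt_IZR in H. lia. }
unfold kf. rewrite INR_IZR_INZ, Z2Nat.id by auto. lra. Qed.

Lemma select_bound (q F : nat -> R) (n L : nat) (Bd : R) :
  (forall j, (j < n)%nat -> 0 <= q j) -> sumR q n = 1 -> (1 <= L)%nat ->
  (forall j, 0 <= F j) -> (forall j, (j < n)%nat -> F j <= Bd) ->
  sumR (fun j => q j * F j) n - INR n * Bd / INR L <=
  / INR L * sumR (fun u => F (chooseF (fun j => kf (q j * INR L)) n u)) L.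
Proof. intros Hq Hs HL HF HB. set (k := fun j => kf (q j * INR L)).
assert (HLp : 0 < INR L) by (apply (lt_INR 0); lia).
assert (Hk : forall j, (j < n)%nat -> INR (k j) <= q j * INR L /\ q j * INR L - 1 < INR (k j)).
{ intros j Hj. apply kf_spec. apply Rmult_le_pos; auto. lra. }
assert (HK : (Ksum k n <= L)%nat).
{ apply INR_le. rewrite INR_Ksum. apply Rle_trans with (sumR (fun j => q j * INR L) n).
  apply sumR_le; intros; apply Hk; auto.
  rewrite (sumR_ext _ (fun j => INR L * q j)) by (intros; lra). rewrite sumR_scal, Hs. lra. }
assert (E : sumR (fun u => F (chooseF k n u)) L = sumR (fun u => F (chooseF k n u)) (Ksum k n + (L - Ksum k n))) by (f_equal; lia).
rewrite E, sumR_add, choose_sum.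
assert (H1 : 0 <= sumR (fun u => F (chooseF k n (Ksum k n + u))) (L - Ksum k n)).
{ apply sumR_nonneg; intros; auto. }
assert (H2 : sumR (fun j => (q j * INR L - 1) * F j) n <= sumR (fun j => INR (k j) * F j) n).
{ apply sumR_le. intros j Hj. apply Rmult_le_compat_r; auto. apply Rlt_le, Hk; auto. }
assert (H3 : sumR (fun j => (q j * INR L - 1) * F j) n >= INR L * sumR (fun j => q j * F j) n - INR n * Bd).
{ rewrite (sumR_ext _ (fun j => INR L * (q j * F j) - F j)) by (intros; lra).
  rewrite sumR_minus, sumR_scal.
  assert (sumR F n <= INR n * Bd). { rewrite <- sumR_const. apply sumR_le; auto. } lra. }
apply Rmult_le_reg_l with (INR L); auto.
rewrite <- Rmult_assoc, Rinv_r by lra. rewrite Rmult_1_l.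
unfold Rdiv. rewrite Rmult_minus_distr_l.
replace (INR L * (INR n * Bd * / INR L)) with (INR n * Bd) by (field; lra). lra. Qed.

Lemma firstn_add {A} a b (l : list A) : firstn (a + b) l = firstn a l ++ firstn b (skipn a l).
Proof. revert l; induction a; intros l; simpl; auto. destruct l; simpl; auto.
destruct b; auto. rewrite IHa; auto. Qed.

Lemma SS_app {A} (Rl : A -> A -> Prop) l1 l2 : StronglySorted Rl (l1 ++ l2) ->
  StronglySorted Rl l1 /\ StronglySorted Rl l2 /\ (forall x y, In x l1 -> In y l2 -> Rl x y).
Proof. induction l1; simpl; intros H. split; [constructor|split; auto]. intros; contradiction.
inversion H; subst. destruct (IHl1 H2) as (A1&A2&A3). rewrite Forall_forall in H3.
split. constructor; auto. apply Forall_forall; intros; apply H3, in_or_app; auto.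
split; auto. intros x y [<-|Hx] Hy; auto. apply H3, in_or_app; auto. Qed.

Lemma in_firstn {A} n (l : list A) x : In x (firstn n l) -> In x l.
Proof. intros H. rewrite <- (firstn_skipn n l). apply in_or_app; auto. Qed.
Lemma in_skipn {A} n (l : list A) x : In x (skipn n l) -> In x l.
Proof. intros H. rewrite <- (firstn_skipn n l). apply in_or_app; auto. Qed.

Lemma pst_le_cap N c W g L : lecap N c (pst W g (cap N c) L).
Proof. intros i. apply pst_le. Qed.

Section Blocks.
Variable Bk : nat.

Definition chunk (b : nat) (L : list job) := firstn Bk (skipn (b * Bk) L).
Definition histb (b : nat) (L : list job) := firstn (b * Bk) L.

Lemma blocks_rev pr rem0 js m : (length js <= m * Bk)%nat ->
  revenue_aux pr [] rem0 js = sumR (fun b => revenue_aux pr (histb b js)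
     (run_state pr [] rem0 (histb b js)) (chunk b js)) m.
Proof. intros Hl.
set (Rk := fun k => revenue_aux pr (histb k js) (run_state pr [] rem0 (histb k js)) (skipn (k * Bk) js)).
assert (Hstep : forall k, Rk k = revenue_aux pr (histb k js) (run_state pr [] rem0 (histb k js)) (chunk k js) + Rk (S k)).
{ intros k. unfold Rk. rewrite <- (firstn_skipn Bk (skipn (k * Bk) js)) at 1.
  rewrite rev_app. f_equal. unfold histb, chunk.
  assert (E1 : firstn (k * Bk) js ++ firstn Bk (skipn (k * Bk) js) = firstn (S k * Bk) js).
  { rewrite <- firstn_add. f_equal. simpl; lia. }
  rewrite E1. f_equal. rewrite <- E1. rewrite run_state_app. simpl. auto.
  rewrite skipn_skipn. reflexivity. }
assert (Hall : forall k, Rk O = sumR (fun b => revenue_aux pr (histb b js) (run_state pr [] rem0 (histb b js)) (chunk b js)) k + Rk k).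
{ induction k. simpl. unfold Rk. simpl. unfold histb. simpl. lra. rewrite IHk, Hstep. simpl. lra. }
rewrite <- (Rplus_0_r (sumR _ m)).
assert (E0 : Rk m = 0). { unfold Rk. rewrite skipn_all2 by lia. simpl; auto. }
rewrite <- E0, <- Hall. unfold Rk. simpl. unfold histb. simpl. auto. Qed.

Definition Gc N W (c : nat -> nat) (g : policy) (b : nat) (L : list job) : R :=
  prev W g (pst W g (cap N c) (histb b L)) (chunk b L).

Lemma rev_blocks N W c g js m : (length js <= m * Bk)%nat ->
  revenue N c (policy_pricer W g) js = sumR (fun b => Gc N W c g b js) m.
Proof. intros Hl. unfold revenue. rewrite (blocks_rev _ _ js m Hl). apply sumR_ext. intros b _.
unfold Gc. rewrite rev_pol, st_pol. auto. Qed.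

Lemma prev_bounds N C W c g lam Q : (forall i, (1 <= i <= N)%nat -> (c i <= C)%nat) ->
  feasible_policy C W g -> (forall j, In j Q -> valid_job N W j) -> lecap N c lam ->
  0 <= prev W g lam Q <= INR (length Q).
Proof. intros Hc Hg. revert lam; induction Q as [|j Q IH]; intros lam HQ Hl; simpl. lra.
assert (Hp : forall k, (k < W)%nat -> 0 < g (window W lam (ja j)) k).
{ intros; apply (pol_prices N C W c g Hc Hg); auto. }
pose proof (step_fst_bounds N W _ j lam Hp (HQ j (or_introl eq_refl))).
pose proof (IH (snd (polstep W g j lam)) ltac:(intros; apply HQ; simpl; auto) (lecap_step N c _ j lam Hl)).
unfold polstep in *. change (match length Q with 0%nat => 1 | S _ => INR (length Q) + 1 end) with (INR (S (length Q))). rewrite S_INR. lra. Qed.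

Lemma Gc_bounds N C W c g b L : (forall i, (1 <= i <= N)%nat -> (c i <= C)%nat) ->
  feasible_policy C W g -> (forall j, In j L -> valid_job N W j) ->
  0 <= Gc N W c g b L <= INR Bk.
Proof. intros Hc Hg HL. unfold Gc.
assert (H := prev_bounds N C W c g (pst W g (cap N c) (histb b L)) (chunk b L) Hc Hg).
destruct H. intros j Hj. apply HL. unfold chunk in Hj. apply in_firstn, in_skipn in Hj; auto.
apply pst_le_cap.
split; auto. eapply Rle_trans; eauto. apply le_INR. unfold chunk. rewrite length_firstn. lia. Qed.

Lemma Gc_prefix N W c g b L L' M : firstn M L' = firstn M L -> ((S b) * Bk <= M)%nat ->
  Gc N W c g b L' = Gc N W c g b L.
Proof. intros HM Hb. unfold Gc, histb, chunk.
assert (E : forall K, (K <= M)%nat -> firstn K L' = firstn K L).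
{ intros K HK. rewrite <- (Nat.min_l K M HK). rewrite <- !firstn_firstn. rewrite HM. auto. }
rewrite !firstn_skipn_comm. rewrite !E by (simpl in Hb; lia). auto. Qed.
End Blocks.

Lemma hq_ext X1 X2 eps n b j : (forall b' j', (b' < b)%nat -> X1 b' j' = X2 b' j') ->
  hq X1 eps n b j = hq X2 eps n b j.
Proof. intros H. unfold hq, hWt, hw.
assert (E : forall j', prodR (fun b' => 1 + eps * X1 b' j') b = prodR (fun b' => 1 + eps * X2 b' j') b).
{ intros j'. apply prodR_ext. intros k Hk. rewrite H; auto. }
rewrite E. f_equal. apply sumR_ext. intros; apply E. Qed.

Lemma chooseF_ext m : forall k1 k2 u, (forall j, (j < m)%nat -> k1 j = k2 j) -> chooseF k1 m u = chooseF k2 m u.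
Proof. induction m; intros k1 k2 u H; simpl; auto. rewrite H by lia.
destruct (Nat.ltb u (k2 O)); auto. f_equal. apply IHm. intros; apply H; lia. Qed.

Section Mech.
Variables (N C W : nat) (c : nat -> nat) (Gamma : list policy) (g0 : policy)
  (Bk Lseed : nat) (eps : R).
Let n := length Gamma.

Definition Xm b j L := Gc Bk N W c (nth j Gamma g0) b L / INR Bk.
Definition kAt b L j := kf (hq (fun b' j' => Xm b' j' L) eps n b j * INR Lseed).
Definition polAt b L u := nth (chooseF (kAt b L) n u) Gamma g0.
Definition mech (u : nat) : pricer := fun hist a rem =>
  let h := polAt (length hist / Bk) hist u in mprice N W h a rem (pst W h (cap N c) hist).

Lemma polAt_prefix b L L' u : firstn (b * Bk) L' = firstn (b * Bk) L -> polAt b L' u = polAt b L u.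
Proof. intros H. unfold polAt, kAt. f_equal. apply chooseF_ext. intros j _. f_equal. f_equal.
apply hq_ext. intros b' j' Hb. unfold Xm. f_equal. apply (Gc_prefix Bk N W c _ b' L L' (b * Bk)); auto.
apply Nat.mul_le_mono_r; lia. Qed.

Hypothesis Hc : forall i, (1 <= i <= N)%nat -> (c i <= C)%nat.
Hypothesis HG : Forall (feasible_policy C W) Gamma.
Hypothesis Hg0 : In g0 Gamma.
Hypothesis HB : (1 <= Bk)%nat.

Lemma nth_feasible j : feasible_policy C W (nth j Gamma g0).
Proof. rewrite Forall_forall in HG. destruct (Nat.lt_ge_cases j (length Gamma)).
apply HG, nth_In; auto. rewrite nth_overflow; auto. Qed.

Lemma mech_block b u js : (forall j, In j js -> valid_job N W j) ->
  StronglySorted (fun x y => (ja x <= ja y)%nat) js ->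
  Gc Bk N W c (polAt b js u) b js - 2 * INR C * INR W <=
  revenue_aux (mech u) (histb Bk b js) (run_state (mech u) [] (cap N c) (histb Bk b js)) (chunk Bk b js).
Proof. intros Hv HS.
assert (HCW : 0 <= 2 * INR C * INR W) by (pose proof (pos_INR C); pose proof (pos_INR W); nra).
unfold Gc. destruct (chunk Bk b js) as [|x r] eqn:Ech.
{ simpl. lra. }
set (h := polAt b js u). set (hist := histb Bk b js).
set (lam := pst W h (cap N c) hist).
assert (Hdec : js = hist ++ (x :: r) ++ skipn Bk (skipn (b * Bk) js)).
{ unfold hist, histb. rewrite <- Ech. unfold chunk. rewrite !firstn_skipn. auto. }
assert (Hlen : length hist = (b * Bk)%nat).
{ assert (length js = length hist + S (length r + length (skipn Bk (skipn (b * Bk) js))))%nat.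
  { rewrite Hdec at 1. rewrite !length_app. simpl. lia. }
  unfold hist, histb in *. rewrite length_firstn in *. lia. }
assert (Hlc : (length (x :: r) <= Bk)%nat). { rewrite <- Ech. unfold chunk. rewrite length_firstn. lia. }
rewrite Hdec in HS. apply SS_app in HS as (HS1 & HS2 & HS3). apply SS_app in HS2 as (HS4 & _ & _).
assert (Hx : forall j, In j (x :: r) -> (ja x <= ja j)%nat).
{ intros j [<-|Hj]; auto. inversion HS4; subst. rewrite Forall_forall in H2. auto. }
assert (Hin : forall j, In j (x :: r) -> In j js).
{ intros j Hj. rewrite Hdec. apply in_or_app. right. apply in_or_app. auto. }
assert (Hinh : forall j, In j hist -> In j js).
{ intros j Hj. rewrite Hdec. apply in_or_app. auto. }
pose proof (blocking N C W c h (mech u) Hc (nth_feasible _) (x :: r) hist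
   (run_state (mech u) [] (cap N c) hist) lam (ja x) HS4) as Hbl.
assert (Hphi : Phi W (ja x) lam <= 2 * INR C * INR W) by (apply (Phi_le N c); auto; apply pst_le_cap).
enough (prev W h lam (x :: r) - Phi W (ja x) lam <= revenue_aux (mech u) hist (run_state (mech u) [] (cap N c) hist) (x :: r)) by lra.
apply Hbl.
- intros j Hj. split; auto.
- intros i Hi. apply (run_state_untouched N W). intros j Hj. split; auto.
  pose proof (HS3 j x Hj (or_introl eq_refl)). simpl in H. lia.
- apply pst_le_cap.
- intros Q1 a rr HQ1. unfold mech.
  rewrite length_app, Hlen.
  replace ((b * Bk + length Q1) / Bk)%nat with b.
  2:{ rewrite Nat.div_add_l by lia. rewrite Nat.div_small by lia. lia. }
  replace (polAt b (hist ++ Q1) u) with h.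
  2:{ symmetry. apply polAt_prefix. rewrite firstn_app, Hlen, Nat.sub_diag. simpl.
      rewrite app_nil_r. unfold hist, histb. rewrite firstn_firstn, Nat.min_id. auto. }
  rewrite pst_app. auto.
Qed.

Lemma mech_feasible u hist rem L : feasible_run_aux W (mech u) hist rem L.
Proof. revert hist rem; induction L; intros hist rem; simpl; auto. split; auto.
intros k Hk. unfold mech, mprice.
set (h := polAt (length hist / Bk) hist u).
destruct (domb N (ja a) rem (pst W h (cap N c) hist)) eqn:Ed.
- destruct (pol_prices N C W c h Hc (nth_feasible _) (pst W h (cap N c) hist) (ja a) k (pst_le_cap _ _ _ _ _) Hk) as (A1&A2&A3).
  split; auto. split; auto. intros H0. apply A3.
  pose proof (domb_spec N c _ _ _ Ed (pst_le_cap _ _ _ _ _) (ja a + k)%nat ltac:(lia)). lia.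
- split; [lra|split; [lra|auto]].
Qed.

Lemma mech_rev u js : (forall j, In j js -> valid_job N W j) ->
  StronglySorted (fun x y => (ja x <= ja y)%nat) js -> (length js <= Bk * Bk)%nat ->
  sumR (fun b => Gc Bk N W c (polAt b js u) b js - 2 * INR C * INR W) Bk <= revenue N c (mech u) js.
Proof. intros Hv HS Hl. unfold revenue. rewrite (blocks_rev Bk _ _ js Bk Hl).
apply sumR_le. intros b _. apply mech_block; auto. Qed.

End Mech.

Lemma exp_rev_seq N c w (f : nat -> pricer) s L js :
  expected_revenue N c (map (fun u => (w, f u)) (seq s L)) js = sumR (fun u => w * revenue N c (f (s + u)%nat) js) L.
Proof. revert s; induction L; intros s. simpl; auto. rewrite sumR_shift. rewrite Nat.add_0_r.
unfold expected_revenue in *. simpl seq. simpl map. simpl fold_right. rewrite IHL. f_equal. apply sumR_ext. intros; f_equal. f_equal. f_equal. lia. Qed.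

Lemma dist_seq (f : nat -> nat -> pricer) s L : (1 <= L)%nat ->
  is_distribution (map (fun u => (/ INR L, f L u)) (seq s L)).
Proof. intros HL. assert (0 < INR L) by (apply (lt_INR 0); lia). split.
- apply Forall_forall. intros x Hx. apply in_map_iff in Hx as (u & <- & _). simpl. apply Rlt_le, Rinv_0_lt_compat; auto.
- assert (forall m s', fold_right (fun wp acc => fst wp + acc) 0 (map (fun u => (/ INR L, f L u)) (seq s' m)) = INR m * / INR L).
  { induction m; intros s'; simpl. lra. rewrite IHm. destruct m; simpl; lra. }
  rewrite H0. field. lra. Qed.

Section Main.
Variables (N C W : nat) (c : nat -> nat) (Gamma : list policy) (g0 : policy) (Bk : nat) (eps : R).
Let n := length Gamma.
Let Lseed := (n * Bk * Bk)%nat.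
Hypothesis Hc : forall i, (1 <= i <= N)%nat -> (c i <= C)%nat.
Hypothesis HG : Forall (feasible_policy C W) Gamma.
Hypothesis Hg0 : In g0 Gamma.
Hypothesis HB : (1 <= Bk)%nat.
Hypothesis Heps : 0 < eps.

Definition Mech := map (fun u => (/ INR Lseed, mech N W c Gamma g0 Bk Lseed eps u)) (seq 0 Lseed).

Lemma regret_main js jstar : (jstar < n)%nat -> (forall j, In j js -> valid_job N W j) ->
  StronglySorted (fun x y => (ja x <= ja y)%nat) js -> (length js <= Bk * Bk)%nat ->
  revenue N c (policy_pricer W (nth jstar Gamma g0)) js - expected_revenue N c Mech js <=
  INR Bk * (eps * INR Bk + ln (INR n) / eps) + 1 + INR Bk * (2 * INR C * INR W).
Proof. intros Hj Hv HS Hl.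
assert (Hn : (1 <= n)%nat) by lia.
assert (HBp : 0 < INR Bk) by (apply (lt_INR 0); lia).
assert (HLp : 0 < INR Lseed) by (apply (lt_INR 0); unfold Lseed; nia).
set (X := fun b j => Xm N W c Gamma g0 Bk b j js).
assert (HX : forall b j, (j < n)%nat -> 0 <= X b j <= 1).
{ intros b j _. unfold X, Xm. destruct (Gc_bounds Bk N C W c (nth j Gamma g0) b js Hc (nth_feasible _ _ _ _ HG Hg0 j) Hv).
  split. apply Rmult_le_pos; auto. apply Rlt_le, Rinv_0_lt_compat; auto.
  unfold Rdiv. apply Rmult_le_reg_r with (INR Bk); auto. rewrite Rmult_assoc, Rinv_l by lra. lra. }
pose proof (hedge X eps n HX Heps Hn Bk jstar Hj) as Hh.
assert (Hg : revenue N c (policy_pricer W (nth jstar Gamma g0)) js = INR Bk * sumR (fun b => X b jstar) Bk).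
{ rewrite (rev_blocks Bk N W c _ js Bk) by lia. rewrite <- sumR_scal. apply sumR_ext. intros b _.
  unfold X, Xm. field. lra. }
assert (HE : INR Bk * sumR (hE X eps n) Bk - 1 - INR Bk * (2 * INR C * INR W) <= expected_revenue N c Mech js).
{ unfold Mech. rewrite exp_rev_seq.
  apply Rle_trans with (sumR (fun u => / INR Lseed * sumR (fun b => Gc Bk N W c (polAt N W c Gamma g0 Bk Lseed eps b js u) b js - 2 * INR C * INR W) Bk) Lseed).
  2:{ apply sumR_le. intros u _. apply Rmult_le_compat_l. apply Rlt_le, Rinv_0_lt_compat; auto.
      apply mech_rev; auto. }
  set (G := fun b u => Gc Bk N W c (polAt N W c Gamma g0 Bk Lseed eps b js u) b js).
  set (K := 2 * INR C * INR W).
  assert (E3 : sumR (fun u => / INR Lseed * sumR (fun b => G b u - K) Bk) Lseed =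
     sumR (fun b => / INR Lseed * sumR (fun u => G b u) Lseed) Bk - INR Bk * K).
  { rewrite (sumR_ext (fun u => / INR Lseed * sumR (fun b => G b u - K) Bk)
        (fun u => sumR (fun b => / INR Lseed * G b u - / INR Lseed * K) Bk)).
    2:{ intros u _. rewrite <- sumR_scal. apply sumR_ext. intros; lra. }
    rewrite sumR_swap.
    rewrite (sumR_ext (fun b => sumR (fun u => / INR Lseed * G b u - / INR Lseed * K) Lseed)
       (fun b => / INR Lseed * sumR (fun u => G b u) Lseed - K)).
    2:{ intros b _. rewrite sumR_minus, sumR_const, sumR_scal. change (sumR (fun u => G b u) Lseed) with (sumR (G b) Lseed). field. lra. }
    rewrite sumR_minus, sumR_const. auto. }
  change (INR Bk * sumR (hE X eps n) Bk - 1 - INR Bk * K <=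
     sumR (fun u => / INR Lseed * sumR (fun b => G b u - K) Bk) Lseed).
  rewrite E3.
  assert (Hsel : forall b, (b < Bk)%nat -> INR Bk * hE X eps n b - / INR Bk <=
     / INR Lseed * sumR (fun u => G b u) Lseed).
  { intros b _. unfold G, polAt.
    pose proof (select_bound (hq X eps n b) (fun j => Gc Bk N W c (nth j Gamma g0) b js) n Lseed (INR Bk)
      (fun j Hj => hq_nonneg X eps n HX Heps Hn b j Hj) (hq_sum X eps n HX Heps Hn b) ltac:(unfold Lseed; nia)
      (fun j => proj1 (Gc_bounds Bk N C W c (nth j Gamma g0) b js Hc (nth_feasible _ _ _ _ HG Hg0 j) Hv))
      (fun j _ => proj2 (Gc_bounds Bk N C W c (nth j Gamma g0) b js Hc (nth_feasible _ _ _ _ HG Hg0 j) Hv))) as Hs.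
    assert (Ek : forall j, kAt N W c Gamma g0 Bk Lseed eps b js j = kf (hq X eps n b j * INR Lseed)) by (intros; reflexivity).
    rewrite (sumR_ext (fun u => Gc Bk N W c (nth (chooseF (kAt N W c Gamma g0 Bk Lseed eps b js) (length Gamma) u) Gamma g0) b js)
      (fun u => Gc Bk N W c (nth (chooseF (fun j => kf (hq X eps n b j * INR Lseed)) n u) Gamma g0) b js)) by (intros; reflexivity).
    assert (E1 : sumR (fun j => hq X eps n b j * Gc Bk N W c (nth j Gamma g0) b js) n = INR Bk * hE X eps n b).
    { unfold hE. rewrite <- sumR_scal. apply sumR_ext. intros j _. unfold X, Xm. field. lra. }
    assert (E2 : INR n * INR Bk / INR Lseed = / INR Bk).
    { unfold Lseed. rewrite !mult_INR. field. assert (0 < INR n) by (apply (lt_INR 0); lia). lra. }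
    lra. }
  apply Rle_trans with (sumR (fun b => INR Bk * hE X eps n b - / INR Bk) Bk - INR Bk * K).
  2:{ apply Rplus_le_compat_r. apply sumR_le. intros b Hb. apply Hsel in Hb. lra. }
  rewrite sumR_minus, sumR_const, sumR_scal. field_simplify; [|lra]. 
  replace (INR Bk * / INR Bk) with 1 by (field; lra). lra. }
rewrite Hg. assert (INR Bk * (sumR (fun b => X b jstar) Bk - sumR (hE X eps n) Bk) <= INR Bk * (eps * INR Bk + ln (INR n) / eps)).
{ apply Rmult_le_compat_l; lra. }
lra. Qed.
End Main.

Definition Kc (C W : nat) : R := 6 + (1 + 4 * INR C * INR W) / sqrt (ln 2).

Lemma ln2_pos : 0 < ln 2.
Proof. rewrite <- ln_1. apply ln_increasing; lra. Qed.

Lemma numeric (T n C W : nat) : (1 <= T)%nat -> (2 <= n)%nat -> (1 <= C)%nat -> (1 <= W)%nat ->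
  let Bk := S (Nat.sqrt T) in
  let eps := sqrt (ln (INR n)) / sqrt (INR Bk) in
  0 < eps /\
  INR Bk * (eps * INR Bk + ln (INR n) / eps) + 1 + INR Bk * (2 * INR C * INR W)
  <= Kc C W * Rpower (INR T) (regret_exponent C W) * sqrt (ln (INR n)).
Proof. intros HT Hn HC HW Bk eps.
assert (Hln2 := ln2_pos).
assert (Hlnn : ln 2 <= ln (INR n)). { apply ln_mono; [lra|]. apply (le_INR 2); auto. }
set (y := sqrt (ln (INR n))). set (z := sqrt (INR Bk)).
assert (Hy2 : 0 < sqrt (ln 2)) by (apply sqrt_lt_R0; lra).
assert (Hyy : sqrt (ln 2) <= y) by (apply sqrt_le_1_alt; auto).
assert (HBk : 1 <= INR Bk) by (apply (le_INR 1); unfold Bk; lia).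
assert (Hz : 0 < z) by (apply sqrt_lt_R0; lra).
assert (Hzz : z * z = INR Bk) by (apply sqrt_sqrt; lra).
assert (Hyy2 : y * y = ln (INR n)) by (apply sqrt_sqrt; lra).
assert (Heps : 0 < eps) by (unfold eps; fold y z; apply Rdiv_lt_0_compat; lra).
split; auto.
assert (E1 : eps * INR Bk + ln (INR n) / eps = 2 * y * z).
{ unfold eps. fold y z. rewrite <- Hzz, <- Hyy2. field. lra. }
rewrite E1.
set (sT := sqrt (INR T)). set (r := sqrt sT).
assert (HT1 : 1 <= INR T) by (apply (le_INR 1); auto).
assert (HsT : 1 <= sT) by (unfold sT; rewrite <- sqrt_1; apply sqrt_le_1_alt; auto).
assert (Hr : 1 <= r) by (unfold r; rewrite <- sqrt_1; apply sqrt_le_1_alt; auto).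
assert (Hrr : r * r = sT) by (apply sqrt_sqrt; lra).
assert (HB2 : INR Bk <= 2 * sT).
{ unfold Bk. rewrite S_INR. pose proof (Nat.sqrt_spec T ltac:(lia)) as [S1 _].
  assert (INR (Nat.sqrt T) <= sT).
  { unfold sT. rewrite <- (sqrt_square (INR (Nat.sqrt T))) by apply pos_INR. apply sqrt_le_1_alt.
    rewrite <- mult_INR. apply le_INR; auto. }
  lra. }
assert (Hz15 : z <= 3 / 2 * r) by nra.
assert (Hpow : sT * r <= Rpower (INR T) (regret_exponent C W)).
{ assert (E : Rpower (INR T) (/ 2 + / 4) = sT * r).
  { rewrite Rpower_plus. unfold sT, r. rewrite Rpower_sqrt by lra. f_equal. unfold sT.
    rewrite <- (Rpower_sqrt (INR T)) by lra.
    rewrite <- (Rpower_sqrt (Rpower (INR T) (/ 2))) by (unfold Rpower; apply exp_pos).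
    rewrite Rpower_mult. f_equal. field. }
  rewrite <- E. apply Rle_Rpower; auto. unfold regret_exponent.
  assert (Hx : 1 <= INR (C * W)) by (apply (le_INR 1); nia).
  assert (INR (C * W) / (INR (C * W) + 1) >= / 2).
  { apply Rle_ge. apply Rmult_le_reg_r with (INR (C * W) + 1); [lra|].
    unfold Rdiv. rewrite Rmult_assoc, Rinv_l by lra. lra. }
  lra. }
assert (HCW : 1 <= INR C * INR W). { rewrite <- mult_INR. apply (le_INR 1). nia. }
assert (Hy0 : 0 < y) by lra.
assert (H1 : INR Bk * (2 * y * z) <= 6 * (sT * r) * y).
{ assert (INR Bk * z <= 3 * (sT * r)).
  { apply Rle_trans with ((2 * sT) * (3 / 2 * r)). apply Rmult_le_compat; lra. lra. }
  nra. }
assert (H2 : 1 + INR Bk * (2 * INR C * INR W) <= (1 + 4 * INR C * INR W) * (sT * r)).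
{ assert (1 <= sT * r) by nra. assert (INR Bk <= 2 * (sT * r)) by nra. nra. }
assert (H3 : (1 + 4 * INR C * INR W) * (sT * r) <= (1 + 4 * INR C * INR W) / sqrt (ln 2) * (sT * r) * y).
{ unfold Rdiv. rewrite (Rmult_comm (1 + 4 * INR C * INR W) (/ sqrt (ln 2))).
  replace ((1 + 4 * INR C * INR W) * (sT * r)) with (((1 + 4 * INR C * INR W) * (sT * r)) * (/ sqrt (ln 2) * sqrt (ln 2))) by (field; lra).
  assert (0 <= (1 + 4 * INR C * INR W) * (sT * r) * / sqrt (ln 2)).
  { apply Rmult_le_pos; [nra|]. apply Rlt_le, Rinv_0_lt_compat; auto. }
  nra. }
assert (HK : Kc C W * (sT * r) * y <= Kc C W * Rpower (INR T) (regret_exponent C W) * y).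
{ assert (0 <= Kc C W). { unfold Kc. assert (0 <= (1 + 4 * INR C * INR W) / sqrt (ln 2)).
    { unfold Rdiv. apply Rmult_le_pos; [nra|]. apply Rlt_le, Rinv_0_lt_compat; auto. } lra. }
  apply Rmult_le_compat_r; [lra|]. apply Rmult_le_compat_l; auto. }
unfold Kc in *. nra.
Qed.

Lemma polpr_feasible N C W c g : (forall i, (1 <= i <= N)%nat -> (c i <= C)%nat) ->
  feasible_policy C W g -> forall js hist rem, lecap N c rem -> feasible_run_aux W (policy_pricer W g) hist rem js.
Proof. intros Hc Hg js. induction js as [|j js IH]; intros hist rem Hl; simpl; auto. split.
- intros k Hk. unfold policy_pricer. apply (pol_prices N C W c g Hc Hg); auto.
- apply IH. apply lecap_step; auto. Qed.

Lemma prev_C0 N W c g lam Q : (forall i, (1 <= i <= N)%nat -> (c i <= 0)%nat) ->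
  feasible_policy 0 W g -> (forall j, In j Q -> valid_job N W j) -> lecap N c lam -> prev W g lam Q <= 0.
Proof. intros Hc Hg. revert lam; induction Q as [|j Q IH]; intros lam HQ Hl; simpl. lra.
pose proof (HQ j (or_introl eq_refl)) as Hv.
assert (HW : (1 <= W)%nat) by (destruct Hv as (V1&V2&V3&V4&V5&V6&_); lia).
pose proof (Phi_drop N 0 W c g (ja j) j lam Hc Hg Hv Hl ltac:(lia) ltac:(lia)).
pose proof (Phi_le N c 0 W (ja j) lam Hc Hl). pose proof (Phi_nonneg W (ja j) (snd (polstep W g j lam))).
simpl in H0. pose proof (IH (snd (polstep W g j lam)) ltac:(intros; apply HQ; simpl; auto) (lecap_step N c _ j lam Hl)).
lra. Qed.

Theorem corollary1 :
  forall (C W : nat), exists K : R,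
  forall (N : nat) (c : nat -> nat) (Gamma : list policy) (T : nat),
    (forall i, (1 <= i <= N)%nat -> (c i <= C)%nat) ->
    Gamma <> nil -> NoDup Gamma ->
    Forall (feasible_policy C W) Gamma ->
    exists M : rand_mech,
      is_distribution M /\
      (forall js, length js = T -> valid_instance N W js ->
         Forall (fun wp => feasible_run N W c (snd wp) js) M) /\
      (forall js, length js = T -> valid_instance N W js ->
         forall g, In g Gamma ->
           revenue N c (policy_pricer W g) js - expected_revenue N c M js
           <= K * Rpower (INR T) (regret_exponent C W)
                * sqrt (ln (INR (length Gamma)))).
Proof.
intros C W. exists (Kc C W). intros N c Gamma T Hc Hne HND HG.
destruct Gamma as [|g0 rest] eqn:EG; [congruence|]. rewrite <- EG in *.
assert (Hg0 : In g0 Gamma) by (rewrite EG; simpl; auto).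
assert (HK : 0 <= Kc C W).
{ unfold Kc. assert (0 < sqrt (ln 2)) by (apply sqrt_lt_R0; apply ln2_pos).
  assert (0 <= (1 + 4 * INR C * INR W) / sqrt (ln 2)).
  { unfold Rdiv. apply Rmult_le_pos. pose proof (pos_INR C); pose proof (pos_INR W); nra.
    apply Rlt_le, Rinv_0_lt_compat; auto. } lra. }
assert (HR : 0 <= Kc C W * Rpower (INR T) (regret_exponent C W) * sqrt (ln (INR (length Gamma)))).
{ apply Rmult_le_pos; [|apply sqrt_pos]. apply Rmult_le_pos; auto. unfold Rpower. apply Rlt_le, exp_pos. }
destruct (Nat.lt_ge_cases (length Gamma) 2) as [Hn|Hn];
[|destruct (Nat.lt_ge_cases T 1) as [HT|HT];
[|destruct (Nat.lt_ge_cases C 1) as [HC|HC];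
[|destruct (Nat.lt_ge_cases W 1) as [HW|HW]]]].
5:{
  set (n := length Gamma) in *.
  destruct (numeric T n C W HT Hn HC HW) as [Heps Hnum].
  set (Bk := S (Nat.sqrt T)) in *. set (eps := sqrt (ln (INR n)) / sqrt (INR Bk)) in *.
  exists (Mech N W c Gamma g0 Bk eps). split; [|split].
  - unfold Mech. apply (dist_seq (fun L u => mech N W c Gamma g0 Bk L eps u)). unfold n in Hn. unfold Bk. nia.
  - intros js _ _. unfold Mech. apply Forall_forall. intros x Hx. apply in_map_iff in Hx as (u & <- & _).
    simpl. apply (mech_feasible N C W c Gamma g0 Bk _ eps Hc HG Hg0 ltac:(unfold Bk; lia)).
  - intros js Hlen [Hv Hs] g Hg. destruct (In_nth Gamma g g0 Hg) as (jstar & Hj & <-).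
    eapply Rle_trans; [apply (regret_main N C W c Gamma g0 Bk eps Hc HG Hg0 ltac:(unfold Bk; lia) Heps js jstar Hj)|].
    + intros j Hj'. rewrite Forall_forall in Hv. auto.
    + apply Sorted_StronglySorted; auto. intros x y z H1 H2. lia.
    + rewrite Hlen. unfold Bk. pose proof (Nat.sqrt_spec T ltac:(lia)). lia.
    + apply Hnum. }
all: exists [(1, policy_pricer W g0)]; split; [split; [repeat constructor; simpl; lra | simpl; lra]|split].
all: try (intros js _ _; constructor; [simpl; apply (polpr_feasible N C W c g0 Hc); [rewrite Forall_forall in HG; auto| intros i; auto] | constructor]).
all: intros js Hlen [Hv Hs] g Hg; unfold expected_revenue; simpl; rewrite Rmult_1_l, Rplus_0_r;
     unfold revenue; rewrite !rev_pol.
all: destruct rest as [|g1 rest'];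
  [ rewrite EG in Hg; destruct Hg as [<-|[]]; lra | ].
all: destruct js as [|j js']; [simpl; lra|].
all: assert (Hv1 : valid_job N W j) by (inversion Hv; auto).
all: assert (HvA : forall j0, In j0 (j :: js') -> valid_job N W j0) by (rewrite Forall_forall in Hv; auto).
all: try (simpl in Hlen; lia).
all: try (rewrite EG in Hn; simpl in Hn; lia).
all: try (destruct Hv1 as (V1&V2&V3&V4&V5&V6&_); lia).
all: assert (C = 0)%nat by lia; subst C.
all: pose proof (prev_C0 N W c g (cap N c) (j :: js') Hc) as P1.
all: assert (Hgf : feasible_policy 0 W g) by (rewrite Forall_forall in HG; auto).
all: specialize (P1 Hgf HvA (fun i => le_n _)).
all: pose proof (prev_bounds N 0 W c g0 (cap N c) (j :: js') Hc ltac:(rewrite Forall_forall in HG; auto) HvA (fun i => le_n _)).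
all: lra.
Qed.
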